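(* Let $f=f(n)\ge0$ with $f\to\infty$ and let $\alpha>0$ be a constant. There exist constants $\zeta>0$ and $C>0$ such that, for all sufficiently large $n$ and every $f/n\le p\le1$, with probability at least $1-Ce^{-(pn)^2}$ the following holds in $\mathcal G(n,p)$: for every $s\le\zeta n$ and every set $S\subseteq[n]$ of size $s$, $|E[S]|\le\alpha pns$.
   Context: $\mathcal G(n,p)$ is the Erdős–Rényi random graph on $[n]$ with edge probability $p$; $E[S]$ is the set of edges with both ends in $S$. *)

(* Defs.v *)
From mathcomp Require Import all_boot all_order all_algebra.
From mathcomp Require Import all_classical all_reals all_analysis.
Set Implicit Arguments. Unset Strict Implicit. Unset Printing Implicit Defensive.
Import Order.TTheory GRing.Theory Num.Theory.
Local Open Scope ring_scope.

(* Vertex set [n] is 'I_n.  A simple graph on [n] is an edge set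
   E \subset pairs n, where an edge {i,j} (i < j) is encoded as the pair (i,j). *)
Definition pairs (n : nat) : {set 'I_n * 'I_n} := [set e : 'I_n * 'I_n | (val e.1 < val e.2)%N].

(* Probability of the event A in G(n,p): each of the (n choose 2) possible
   edges is present independently with probability p. *)
Definition gnp_prob (R : realType) (n : nat) (p : R)
    (A : pred {set 'I_n * 'I_n}) : R :=
  \sum_(E in powerset (pairs n) | A E)
     p ^+ #|E| * (1 - p) ^+ (#|pairs n| - #|E|).

Definition edges_in (n : nat) (E : {set 'I_n * 'I_n}) (S : {set 'I_n})
  : {set 'I_n * 'I_n} :=
  [set e in E | (e.1 \in S) && (e.2 \in S)].

Definition locally_sparse (R : realType) (n : nat) (p zeta alpha : R)
    (E : {set 'I_n * 'I_n}) : bool :=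
  [forall S : {set 'I_n},
     (#|S|%:R <= zeta * n%:R) ==>
     (#|edges_in E S|%:R <= alpha * p * n%:R * #|S|%:R)].

(* Main.v *)
Require Import Defs.
From mathcomp Require Import all_boot all_order all_algebra.
From mathcomp Require Import all_classical all_reals all_analysis.
From mathcomp Require Import ring lra.
Import Order.TTheory GRing.Theory Num.Theory.
Local Open Scope ring_scope.
Set Implicit Arguments. Unset Strict Implicit.
Section Prob.
Variable R : realType.
Variable T : finType.

Lemma sum_set_prod (g : T -> bool -> R) :
  \sum_(E : {set T}) \prod_(e : T) g e (e \in E) = \prod_(e : T) (g e true + g e false).
Proof.
have -> : \prod_(e : T) (g e true + g e false) = \prod_(e : T) \sum_(b : bool) g e b.
  by apply: eq_bigr => e _; rewrite big_bool.
rewrite bigA_distr_bigA /=.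
rewrite (reindex (fun E : {set T} => [ffun e => e \in E])) /=.
  by apply: eq_bigr => E _; apply: eq_bigr => e _; rewrite ffunE.
exists (fun f : {ffun T -> bool} => [set e | f e]) => [E _|f _].
  by apply/setP => e; rewrite inE ffunE.
by apply/ffunP => e; rewrite ffunE inE.
Qed.

Variable U : {set T}.
Variable p : R.
Hypothesis p0 : 0 <= p.
Hypothesis p1 : p <= 1.

Definition hw (e : T) (b : bool) : R :=
  if e \in U then (if b then p else 1 - p) else (if b then 0 else 1).

Definition mu (E : {set T}) : R := \prod_(e : T) hw e (e \in E).

Lemma mu_ge0 (E : {set T}) : 0 <= mu E.
Proof.
apply: prodr_ge0 => e _; rewrite /hw.
by case: (e \in U); case: (e \in E) => //; rewrite subr_ge0.
Qed.

Lemma mu_eq (E : {set T}) : E \subset U -> mu E = p ^+ #|E| * (1 - p) ^+ (#|U| - #|E|).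
Proof.
move=> EU; rewrite /mu (bigID (fun e => e \in U)) /=.
rewrite [X in _ * X]big1 ?mulr1; last first.
  move=> e /negbTE eU; rewrite /hw eU.
  by case: ifP => // eE; move: (fintype.subsetP EU e); rewrite eE eU => /(_ isT).
rewrite (bigID (fun e => e \in E)) /=.
have -> : \prod_(i | (i \in U) && (i \in E)) hw i (i \in E) = \prod_(i in E) p.
  apply: eq_big => e; first by case eE: (e \in E); rewrite ?andbT ?andbF // (fintype.subsetP EU).
  by move=> /andP[eU eE]; rewrite /hw eU eE.
have -> : \prod_(i | (i \in U) && (i \notin E)) hw i (i \in E) = \prod_(i in U :\: E) (1 - p).
  apply: eq_big => e; first by rewrite inE andbC.
  by move=> /andP[eU /negbTE eE]; rewrite /hw eU eE.
rewrite !prodr_const cardsD.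
by move/finset.setIidPr: EU => ->.
Qed.

Lemma mu_out (E : {set T}) : ~~ (E \subset U) -> mu E = 0.
Proof.
case/subsetPn=> e eE eU; rewrite /mu (bigD1 e) //= /hw (negbTE eU) eE.
by rewrite mul0r.
Qed.

Lemma mu_total : \sum_(E : {set T}) mu E = 1.
Proof.
rewrite /mu sum_set_prod big1 // => e _; rewrite /hw.
by case: (e \in U); rewrite ?subrKC ?add0r.
Qed.

Lemma mu_contain (F : {set T}) : F \subset U -> \sum_(E : {set T} | F \subset E) mu E = p ^+ #|F|.
Proof.
move=> FU.
pose g e b := hw e b * (if e \in F then b%:R else 1).
have H1 : forall E : {set T}, \prod_e g e (e \in E) = mu E * (F \subset E)%:R.
  move=> E; rewrite /g big_split /=; congr (_ * _).
  case: (boolP (F \subset E)) => FE.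
    by apply: big1 => e _; case: ifP => // eF; rewrite (fintype.subsetP FE).
  case/subsetPn: FE => e eF eE; rewrite (bigD1 e) //= eF (negbTE eE) mul0r //.
rewrite big_mkcond /=.
transitivity (\sum_(E : {set T}) \prod_e g e (e \in E)).
  by apply: eq_bigr => E _; rewrite H1; case: (F \subset E); rewrite ?mulr1 ?mulr0.
rewrite sum_set_prod.
rewrite (bigID (fun e => e \in F)) /= [X in _ * X]big1 ?mulr1; last first.
  move=> e /negbTE eF; rewrite /g eF !mulr1 /hw.
  by case: (e \in U); rewrite ?subrKC ?add0r.
rewrite -prodr_const; apply: eq_bigr => e eF.
by rewrite /g eF /hw (fintype.subsetP FU) // mulr1 mulr0 addr0.
Qed.

End Prob.

Definition kk (R : realType) (n : nat) (p alpha : R) (s : nat) : nat :=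
  (Num.truncn (alpha * p * n%:R * s%:R)).+1.

Lemma gnp_mu (R : realType) n (p : R) (A : pred {set 'I_n * 'I_n}) :
  gnp_prob p A = \sum_(E | A E) mu (pairs n) p E.
Proof.
rewrite /gnp_prob [RHS](bigID (fun E : {set 'I_n * 'I_n} => E \subset pairs n)) /=.
rewrite [X in _ = _ + X]big1 ?addr0; last by move=> E /andP[_ /mu_out ->].
apply: eq_big => E; first by rewrite powersetE andbC.
by move=> /andP[]; rewrite powersetE => /mu_eq ->.
Qed.

Lemma fail_bound (R : realType) (n : nat) (p zeta alpha : R) :
  0 <= p -> p <= 1 -> 0 <= alpha ->
  \sum_(E : {set 'I_n * 'I_n} | ~~ locally_sparse p zeta alpha E) mu (pairs n) p E
   <= \sum_(S : {set 'I_n} | #|S|%:R <= zeta * n%:R)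
        'C(#|edges_in (pairs n) S|, kk n p alpha #|S|)%:R * p ^+ kk n p alpha #|S|.
Proof.
move=> p0 p1 a0.
set U := pairs n.
pose Q (S : {set 'I_n}) (F : {set 'I_n * 'I_n}) :=
  (F \subset edges_in U S) && (#|F| == kk n p alpha #|S|).
pose X (E : {set 'I_n * 'I_n}) := \sum_(S : {set 'I_n} | #|S|%:R <= zeta * n%:R)
   \sum_(F | Q S F) ((F \subset E)%:R : R).
have X0 E : 0 <= X E by apply: sumr_ge0 => S _; apply: sumr_ge0 => F _; case: (_ \subset _).
have step1 : \sum_(E | ~~ locally_sparse p zeta alpha E) mu U p E
             <= \sum_E mu U p E * X E.
  rewrite [X in _ <= X](bigID (fun E => ~~ locally_sparse p zeta alpha E)) /=.
  rewrite -[X in X <= _]addr0; apply: lerD; last first.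
    by apply: sumr_ge0 => E _; apply: mulr_ge0 => //; apply: mu_ge0.
  apply: ler_sum => E bad.
  case: (boolP (E \subset U)) => EU; last by rewrite mu_out // mul0r.
  rewrite -[X in X <= _]mulr1; apply: ler_wpM2l; first exact: mu_ge0.
  case/forallPn: bad => S; rewrite negb_imply => /andP[Sz big].
  have kle : (kk n p alpha #|S| <= #|edges_in E S|)%N.
    rewrite /kk truncn_lt_nat; last by rewrite !mulr_ge0 ?ler0n.
    by rewrite ltNge.
  have : (0 < #|[set A : {set 'I_n * 'I_n} | A \subset edges_in E S & #|A| == kk n p alpha #|S|]|)%N.
    by rewrite cards_draws bin_gt0.
  rewrite card_gt0 => /set0Pn [F]; rewrite inE => /andP[FE /eqP Fk].
  have QF : Q S F.
    rewrite /Q Fk eqxx andbT; apply: (fintype.subset_trans FE).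
    apply/fintype.subsetP => e; rewrite [e \in edges_in E S]inE => /andP[eE H].
    by rewrite /edges_in inE H andbT (fintype.subsetP EU).
  have FsE : F \subset E.
    apply: (fintype.subset_trans FE); apply/fintype.subsetP => e; rewrite inE.
    by case/andP.
  rewrite /X (bigD1 S) //= (bigD1 F) //= FsE -addrA lerDl.
  apply: addr_ge0; first by apply: sumr_ge0 => F' _; case: (_ \subset _).
  by apply: sumr_ge0 => S' _; apply: sumr_ge0 => F' _; case: (_ \subset _).
apply: (le_trans step1).
rewrite /X.
under eq_bigr => E _ do rewrite mulr_sumr.
rewrite exchange_big /=; apply: ler_sum => S _.
under eq_bigr => E _ do rewrite mulr_sumr.
rewrite exchange_big /=.
have -> : \sum_(F | Q S F) \sum_E mu U p E * ((F \subset E)%:R : R)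
     = \sum_(F | Q S F) p ^+ kk n p alpha #|S|.
  apply: eq_bigr => F /andP[FS /eqP Fk].
  rewrite -Fk -(@mu_contain _ _ U p F); last first.
    apply: (fintype.subset_trans FS); apply/fintype.subsetP => e; rewrite inE; by case/andP.
  rewrite [RHS]big_mkcond /=; apply: eq_bigr => E _.
  by case: (_ \subset _); rewrite ?mulr1 ?mulr0.
rewrite (eq_bigl (fun F => F \in [set A : {set 'I_n * 'I_n} | A \subset edges_in U S & #|A| == kk n p alpha #|S|])); last by move=> F; rewrite inE.
by rewrite sumr_const cards_draws mulr_natl.
Qed.


Lemma ffact_le_exp m k : (m ^_ k <= m ^ k)%N.
Proof.
elim: k => [|k IH]; first by rewrite ffactn0 expn0.
by rewrite ffactnSr expnSr leq_mul // leq_subr.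
Qed.

Lemma binom_bound (R : realType) m k :
  ('C(m, k))%:R <= (expR 1 * m%:R / k%:R) ^+ k :> R.
Proof.
case: k => [|k]; first by rewrite bin0 expr0.
have kf : 0 < (k.+1)`!%:R :> R by rewrite ltr0n fact_gt0.
have H1 : ('C(m, k.+1))%:R <= (m%:R ^+ k.+1) / (k.+1)`!%:R :> R.
  rewrite ler_pdivlMr // -natrM bin_ffact -natrX ler_nat.
  exact: ffact_le_exp.
have H2 : (k.+1)%:R ^+ k.+1 / (k.+1)`!%:R <= expR 1 ^+ k.+1 :> R.
  rewrite -expRM_natl mulr1.
  have := @expR_ge1Dxn R (k.+1)%:R k (ler0n _ _).
  by apply: le_trans; rewrite lerDr.
apply: (le_trans H1).
have kp : 0 < (k.+1)%:R :> R by rewrite ltr0n.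
rewrite expr_div_n exprMn ler_pdivlMr ?exprn_gt0 //.
rewrite mulrAC ler_pdivrMr //.
have H3 : (k.+1)%:R ^+ k.+1 <= expR 1 ^+ k.+1 * (k.+1)`!%:R :> R.
  by rewrite -ler_pdivrMr.
apply: (le_trans (ler_wpM2l _ H3)); first by rewrite exprn_ge0 // ler0n.
by rewrite mulrA [_ * expR 1 ^+ _]mulrC.
Qed.

Lemma geom_half (R : realType) N : \sum_(s < N) (2^-1 : R) ^+ s <= 2.
Proof.
have HE : \sum_(s < N) (2^-1 : R) ^+ s = 2 - 2 * (2^-1) ^+ N.
  elim: N => [|N IH]; first by rewrite big_ord0 expr0 mulr1 subrr.
  rewrite big_ord_recr /= IH exprS; field.
  by [].

rewrite HE lerBlDr lerDl; apply: mulr_ge0 => //; apply: exprn_ge0.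
Qed.

Lemma group_card (R : realType) n (G : nat -> R) :
  \sum_(S : {set 'I_n}) G #|S| = \sum_(s < n.+1) 'C(n, s)%:R * G s.
Proof.
rewrite (partition_big (fun S : {set 'I_n} => inord #|S| : 'I_n.+1) xpredT) //=.
apply: eq_bigr => s _.
have -> : \sum_(S : {set 'I_n} | inord #|S| == s) G #|S|
        = \sum_(S in [set A : {set 'I_n} | #|A| == s]) G s.
  apply: eq_big => S; rewrite ?inE.
    have Sn : (#|S| <= n)%N by rewrite -[X in (_ <= X)%N]card_ord max_card.
    apply/eqP/eqP => [<-|->]; first by rewrite inordK.
    by apply/val_inj; rewrite /= inordK // -(inordK Sn).
  by move/eqP=> <-; rewrite inordK // -[X in (_ < X.+1)%N]card_ord ltnS max_card.
by rewrite sumr_const card_draws card_ord mulr_natl.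
Qed.




Lemma per_s (R : realType) (n s t k : nat) (p alpha zeta L : R) :
  0 <= L -> 0 < alpha -> 0 < p -> (0 < n)%N -> (1 <= t)%N -> (t < s)%N ->
  t%:R <= alpha * p * n%:R -> alpha * p * n%:R * s%:R < k%:R ->
  s%:R <= zeta * n%:R -> zeta = expR (- L) * alpha / expR 1 ->
  2 * (expR 1 ^+ 2 / alpha * expR (- L) ^+ t.-1) <= 1 ->
  'C(n, s)%:R * (expR 1 * (s * s)%:R * p / k%:R) ^+ k
    <= (2 * (expR 1 ^+ 2 / alpha * expR (- L) ^+ t.-1)) ^+ t * (2^-1) ^+ s.
Proof.
move=> L0 a0 p0 n0 t1 ts ht hk hsz hz hq.
set e := expR 1 in hz hq *.
have e0 : 0 < e by apply: expR_gt0.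
have nR : 0 < n%:R :> R by rewrite ltr0n.
have sR : 0 < s%:R :> R by rewrite ltr0n (leq_ltn_trans _ ts).
have kR : 0 < k%:R :> R.
  by apply: le_lt_trans hk; rewrite !mulr_ge0 // ?ltW.
set y := e / alpha * s%:R / n%:R.
have y0 : 0 <= y by rewrite /y !mulr_ge0 // ?invr_ge0 ?ltW.
have yL : y <= expR (- L).
  rewrite /y ler_pdivrMr // -(ler_pM2l (x := alpha / e)); last by rewrite divr_gt0.
  have -> : alpha / e * (e / alpha * s%:R) = s%:R.
    by field; rewrite !gt_eqF.
  apply: (le_trans hsz); rewrite hz le_eqVlt; apply/orP; left; apply/eqP.
  by field; rewrite !gt_eqF.
have y1 : y <= 1 by apply: (le_trans yL); by rewrite expR_le1 oppr_le0.
have w0 : 0 <= e * (s * s)%:R * p / k%:R.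
  by rewrite divr_ge0 ?ler0n // !mulr_ge0 ?ler0n // ltW.
have wy : e * (s * s)%:R * p / k%:R <= y.
  rewrite ler_pdivrMr //.
  apply: (le_trans _ (ler_wpM2l y0 (ltW hk))).
  rewrite /y natrM le_eqVlt; apply/orP; left; apply/eqP; field.
  by rewrite !gt_eqF.
have X1 : (e * (s * s)%:R * p / k%:R) ^+ k <= y ^+ (t * s).
  apply: (le_trans (lerXn2r k _ _ wy)); rewrite ?nnegrE //.
  apply: ler_wiXn2l => //.
  have : ((t * s)%:R < k%:R :> R).
    apply: le_lt_trans hk; rewrite natrM ler_pM2r //.
  by rewrite ltr_nat => /ltnW.
have X3 : 'C(n, s)%:R <= (e * n%:R / s%:R) ^+ s :> R by apply: binom_bound.
have X4 : e * n%:R / s%:R * y ^+ t <= e ^+ 2 / alpha * expR (- L) ^+ t.-1.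
  rewrite -(prednK t1) exprS mulrA.
  have -> : e * n%:R / s%:R * y = e ^+ 2 / alpha.
    by rewrite /y; field; rewrite !gt_eqF.
  apply: ler_wpM2l; first by rewrite divr_ge0 ?exprn_ge0 ?ltW.
  by rewrite lerXn2r ?nnegrE ?expR_ge0.
set q := e ^+ 2 / alpha * expR (- L) ^+ t.-1 in hq X4 *.
have q0 : 0 <= q by rewrite /q !mulr_ge0 ?exprn_ge0 ?invr_ge0 ?expR_ge0 ?ltW.
have X5 : 'C(n, s)%:R * (e * (s * s)%:R * p / k%:R) ^+ k <= q ^+ s.
  apply: (le_trans (ler_pM (ler0n _ _) (exprn_ge0 _ w0) X3 X1)).
  rewrite exprM -exprMn; apply: lerXn2r; rewrite ?nnegrE //.
    by rewrite mulr_ge0 ?exprn_ge0 // divr_ge0 ?ler0n // mulr_ge0 ?ler0n // ltW.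
apply: (le_trans X5).
have sE : s = (t + (s - t))%N by rewrite subnKC // ltnW.
move: (s - t)%N sE => d ->.
rewrite !exprD mulrA -exprMn mulrAC mulfV // mul1r.
apply: ler_wpM2l; first exact: exprn_ge0.
apply: lerXn2r; rewrite ?nnegrE ?invr_ge0 //.
lra.
Qed.


Lemma final_exp (R : realType) (t : nat) (alpha x : R) :
  0 < alpha -> (2 <= t)%N -> 0 <= x -> alpha * x < t%:R + 1 ->
  let B := 2 * expR 1 ^+ 2 / alpha in
  let L := 8 / alpha ^+ 2 + 2 * B + 2 in
  2 * (expR 1 ^+ 2 / alpha * expR (- L) ^+ t.-1) <= 1 /\
  (2 * (expR 1 ^+ 2 / alpha * expR (- L) ^+ t.-1)) ^+ t <= expR (- x ^+ 2).
Proof.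
move=> a0 t2 x0 hx B L.
have B0 : 0 <= B.
  rewrite /B; apply: divr_ge0; last exact: ltW.
  by apply: mulr_ge0 => //; apply: exprn_ge0; apply: expR_ge0.
have M0 : 0 < 1 / alpha ^+ 2 by apply: divr_gt0 => //; apply: exprn_gt0.
have E1 : 2 * (expR 1 ^+ 2 / alpha * expR (- L) ^+ t.-1)
          = B * expR (t.-1%:R * - L) by rewrite expRM_natl /B !mulrA.
have E2 : B * expR (t.-1%:R * - L) <= expR (B + t.-1%:R * - L).
  rewrite expRD ler_wpM2r ?expR_ge0 //.
  by apply: le_trans (expR_ge1Dx B); rewrite lerDr.
set D := B + t.-1%:R * - L in E2.
have T2 : 2 <= t%:R :> R by rewrite (ler_nat R 2 t).
have Tm : t.-1%:R = t%:R - 1 :> R.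
  by rewrite -{2}(prednK (leq_trans _ t2)) // -natr1 addrK.
have D0 : D <= 0.
  rewrite /D Tm /L; nra.
split; first by rewrite E1; apply: (le_trans E2); rewrite expR_le1.
rewrite E1; apply: (le_trans (lerXn2r t _ _ E2)).
- by rewrite nnegrE mulr_ge0 // expR_ge0.
- by rewrite nnegrE expR_ge0.
rewrite -expRM_natl ler_expR.
have hx2 : x ^+ 2 <= (t%:R + 1) ^+ 2 * (1 / alpha ^+ 2).
  have -> : x ^+ 2 = (alpha * x) ^+ 2 * (1 / alpha ^+ 2) by field; rewrite gt_eqF.
  apply: ler_wpM2r; first exact: ltW.
  apply: lerXn2r; last exact: ltW.
    by rewrite nnegrE mulr_ge0 // ltW.
  by rewrite nnegrE; apply: addr_ge0.
set M := 1 / alpha ^+ 2 in M0 hx2.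
have LE : L = 8 * M + 2 * B + 2 by rewrite /L /M; field; rewrite gt_eqF.
rewrite /D Tm LE.
set T := t%:R in T2 hx2 *.
have h1 : 0 <= B * (T * (2 * T - 3)) by apply: mulr_ge0 => //; apply: mulr_ge0; lra.
have h2 : 0 <= M * ((T - 2) * (7 * T + 4) + 7).
  apply: mulr_ge0; first exact: ltW.
  have : 0 <= (T - 2) * (7 * T + 4) by apply: mulr_ge0; lra.
  lra.
have h3 : 0 <= T * (T - 1) by apply: mulr_ge0; lra.
nra.
Qed.




Lemma per_S (R : realType) n (S : {set 'I_n}) (t k : nat) (p a : R) :
  0 <= p -> 0 <= a -> t%:R <= a -> a * #|S|%:R < k%:R ->
  'C(#|edges_in (pairs n) S|, k)%:R * p ^+ k
   <= if (t < #|S|)%N then (expR 1 * (#|S| * #|S|)%:R * p / k%:R) ^+ k else 0.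
Proof.
move=> p0 a0 ta hk.
have mle : (#|edges_in (pairs n) S| <= #|S| * #|S|)%N.
  rewrite -cardsX; apply: subset_leq_card; apply/fintype.subsetP => [[i j]].
  by rewrite !inE /= => /andP[_ /andP[-> ->]].
case: ifP => ts.
  apply: (le_trans (ler_wpM2r (exprn_ge0 _ p0) (binom_bound _ _ _))).
  rewrite -exprMn; apply: lerXn2r.
  - by rewrite nnegrE !mulr_ge0 ?expR_ge0 ?ler0n.
  - by rewrite nnegrE divr_ge0 ?ler0n // !mulr_ge0 ?expR_ge0 ?ler0n.
  rewrite mulrAC ler_wpM2r // ler_wpM2r ?invr_ge0 ?ler0n // ler_wpM2l ?expR_ge0 //.
  by rewrite ler_nat.
rewrite bin_small ?mul0r //.
apply: (leq_ltn_trans mle).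
have : (#|S| * #|S|)%:R < k%:R :> R.
  apply: le_lt_trans hk; rewrite natrM ler_wpM2r ?ler0n //.
  apply: le_trans ta; rewrite ler_nat; by rewrite leqNgt ts.
by rewrite ltr_nat.
Qed.

Theorem lemma4p14 (R : realType) (f : nat -> R)
  (f_ge0 : forall n, 0 <= f n)
  (f_infty : forall M : R, exists N : nat, forall n, (N <= n)%N -> M <= f n)
  (alpha : R) (alpha_gt0 : 0 < alpha) :
  exists zeta : R, exists C : R, 0 < zeta /\ 0 < C /\
    exists N : nat, forall n : nat, (N <= n)%N ->
      forall p : R, f n / n%:R <= p -> p <= 1 ->
        1 - C * expR (- (p * n%:R) ^+ 2)
          <= @gnp_prob R n p (@locally_sparse R n p zeta alpha).
Proof.
pose B : R := 2 * expR 1 ^+ 2 / alpha.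
pose L : R := 8 / alpha ^+ 2 + 2 * B + 2.
pose zeta : R := expR (- L) * alpha / expR 1.
have B0 : 0 <= B.
  rewrite /B; apply: divr_ge0; last exact: ltW.
  by apply: mulr_ge0 => //; apply: exprn_ge0; apply: expR_ge0.
have L0 : 0 <= L.
  rewrite /L; apply: addr_ge0 => //; apply: addr_ge0; last exact: mulr_ge0.
  by apply: divr_ge0 => //; apply: exprn_ge0; apply: ltW.
exists zeta, 2; split.
  by rewrite /zeta divr_gt0 ?mulr_gt0 ?expR_gt0.
split=> //.
have [N HN] := f_infty (2 / alpha).
exists (maxn N 1) => n hn p hp1 hp2.
have n0 : (0 < n)%N by rewrite (leq_trans _ hn) // leq_maxr.
have nR : 0 < n%:R :> R by rewrite ltr0n.
have fn : 2 / alpha <= f n by apply: HN; rewrite (leq_trans _ hn) // leq_maxl.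
have fp : f n <= p * n%:R by rewrite -ler_pdivrMr.
have apn : 2 <= alpha * (p * n%:R).
  by rewrite -ler_pdivrMl // mulrC; apply: le_trans fp.
have pn0 : 0 < p * n%:R.
  by apply: lt_le_trans fp; apply: lt_le_trans fn; rewrite divr_gt0.
have p0 : 0 < p by move: pn0; rewrite pmulr_lgt0.
set a := alpha * p * n%:R.
have aE : a = alpha * (p * n%:R) by rewrite /a mulrA.
have a0 : 0 <= a by rewrite aE; apply: le_trans apn.
pose t := Num.truncn a.
have t2 : (2 <= t)%N by rewrite /t truncn_ge_nat // aE.
have at1 : alpha * (p * n%:R) < t%:R + 1 by rewrite -aE natr1 /t truncnS_gt.
have ta : t%:R <= a by rewrite /t truncn_le.
have [hq hfin] := final_exp alpha_gt0 t2 (ltW pn0) at1.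
rewrite -/B -/L in hq hfin.
set q := expR 1 ^+ 2 / alpha * expR (- L) ^+ t.-1 in hq hfin.
rewrite gnp_mu.
have tot := mu_total (pairs n) p.
rewrite (bigID (fun E => locally_sparse p zeta alpha E)) /= in tot.
rewrite -[X in X - _ <= _]tot -addrA gerDl subr_le0.
have FB := @fail_bound R n p zeta alpha (ltW p0) hp2 (ltW alpha_gt0).
refine (le_trans FB _).
pose b (s : nat) : R := if s%:R <= zeta * n%:R then
   (if (t < s)%N then (expR 1 * (s * s)%:R * p / (kk n p alpha s)%:R) ^+ kk n p alpha s else 0)
   else 0.
apply: (@le_trans _ _ (\sum_(S : {set 'I_n}) b #|S|)).
  rewrite big_mkcond /=; apply: ler_sum => S _; rewrite /b.
  case: ifP => // _; apply: (@per_S R n S t _ p a) => //; first exact: ltW.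
  by rewrite /kk -/a truncnS_gt.
rewrite group_card.
have q0 : 0 <= 2 * q.
  apply: mulr_ge0 => //; apply: mulr_ge0; last by apply: exprn_ge0; apply: expR_ge0.
  by apply: divr_ge0; [apply: exprn_ge0; apply: expR_ge0 | apply: ltW].
have hh s : 0 <= (2 * q) ^+ t * 2^-1 ^+ s.
  by apply: mulr_ge0; apply: exprn_ge0 => //; rewrite invr_ge0.
apply: (@le_trans _ _ (\sum_(s < n.+1) (2 * q) ^+ t * 2^-1 ^+ s)).
  apply: ler_sum => s _; rewrite /b.
  case: ifP => hsz; last first.
    by rewrite mulr0 hh.
  case: ifP => ts; last first.
    by rewrite mulr0 hh.
  apply: per_s => //.
  - by rewrite (leq_trans _ t2).
  - by rewrite /kk -/a truncnS_gt.
  - exact: hsz.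
rewrite -mulr_sumr mulrC; apply: ler_pM => //.
- by apply: sumr_ge0 => s _; apply: exprn_ge0; rewrite invr_ge0.
- exact: exprn_ge0.
- exact: geom_half.
Qed.
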